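(* $\mathcal{L}_{AIL}\not\preceq\mathcal{L}_{FH}$: there exists $\psi\in\mathcal{L}_{AIL}$ such that no $\varphi\in\mathcal{L}_{FH}$ satisfies, for every epistemic model with awareness $M$ and every world $w$ of $M$, $M,w\vDash_{AIL}\psi$ iff $M,w\vDash_{FH}\varphi$.
   Context: Let $\mathcal{P}$ be a countable set of atoms and $\mathcal{G}$ a finite set of agents. An epistemic model with awareness is $M=\langle W,\{\sim_i,\mathscr{A}_i\}_{i\in\mathcal{G}},V\rangle$: $W\neq\emptyset$, $\sim_i$ an equivalence relation on $W$, $\mathscr{A}_i:W\to2^{\mathcal{P}}$ with $\mathscr{A}_i(w)=\mathscr{A}_i(v)$ whenever $(w,v)\in\sim_i$, $V:\mathcal{P}\to2^W$. $(w,v)\in\approx_i$ iff $\mathscr{A}_i(w)=\mathscr{A}_i(v)$ and $w,v$ agree on all $p\in\mathscr{A}_i(w)$. $\sim_i\circ\approx_i=\{(w,v):\exists t\,((w,t)\in\approx_i,(t,v)\in\sim_i)\}$; $R^+$ is the transitive closure. $\mathcal{L}_{AIL}$: $\varphi::=p\mid\neg\varphi\mid\varphi\wedge\varphi\mid A_i\varphi\mid I_i\varphi\mid E_i\varphi\mid[\approx]_i\varphi\mid[\circ^+]_i\varphi$; $\mathcal{L}_{FH}$ is the fragment without $[\approx]_i,[\circ^+]_i$. $\vDash_{AIL}$: $p$ iff $w\in V(p)$; Boolean usual; $A_i\varphi$ iff $At(\varphi)\subseteq\mathscr{A}_i(w)$ ($At$ = atoms occurring); $I_i\varphi$, $[\approx]_i\varphi$,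 $[\circ^+]_i\varphi$ iff $\varphi$ holds at all successors along $\sim_i$, $\approx_i$, $(\sim_i\circ\approx_i)^+$ respectively; $E_i\varphi$ iff $A_i\varphi$ and $[\circ^+]_i\varphi$ hold. $\vDash_{FH}$ on $\mathcal{L}_{FH}$ is the same except $E_i\varphi$ holds iff $A_i\varphi$ and $I_i\varphi$ hold. *)

(* Defs.v *)
From mathcomp Require Import all_boot.
From Stdlib Require Import Relations.


Set Implicit Arguments.
Unset Strict Implicit.
Unset Printing Implicit Defensive.

(* Atoms: the countable set P is taken to be nat. *)
Definition atom := nat.

Inductive ail (G : finType) : Type :=
| AAtom : atom -> ail G
| ANeg : ail G -> ail G
| AAnd : ail G -> ail G -> ail G
| AAw : G -> ail G -> ail G
| AImp : G -> ail G -> ail G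
| AExp : G -> ail G -> ail G
| ABoxApprox : G -> ail G -> ail G
| ABoxCirc : G -> ail G -> ail G.

Inductive fh (G : finType) : Type :=
| FAtom : atom -> fh G
| FNeg : fh G -> fh G
| FAnd : fh G -> fh G -> fh G
| FAw : G -> fh G -> fh G
| FImp : G -> fh G -> fh G
| FExp : G -> fh G -> fh G.

Fixpoint occ_ail (G : finType) (p : atom) (f : ail G) : Prop :=
  match f with
  | AAtom q => p = q
  | ANeg g => occ_ail p g
  | AAnd g h => occ_ail p g \/ occ_ail p h
  | AAw _ g | AImp _ g | AExp _ g | ABoxApprox _ g | ABoxCirc _ g => occ_ail p g
  end.

Fixpoint occ_fh (G : finType) (p : atom) (f : fh G) : Prop :=
  match f with
  | FAtom q => p = q
  | FNeg g => occ_fh p g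
  | FAnd g h => occ_fh p g \/ occ_fh p h
  | FAw _ g | FImp _ g | FExp _ g => occ_fh p g
  end.

Record model (G : finType) : Type := Model {
  W : Type;
  w_inhabited : inhabited W;
  sim : G -> relation W;
  sim_equiv : forall i, equivalence W (sim i);
  aw : G -> W -> atom -> Prop;
  aw_sim : forall i w v, sim i w v -> aw i w = aw i v;
  val : atom -> W -> Prop
}.

Arguments W {G} m.
Arguments sim {G} m i.
Arguments aw {G} m i.
Arguments val {G} m p.

Section Sem.
Variable G : finType.
Variable M : model G.

Definition approx (i : G) (w v : W M) : Prop :=
  aw M i w = aw M i v /\ (forall p, aw M i w p -> (val M p w <-> val M p v)).

Definition circ (i : G) (w v : W M) : Prop :=
  exists t, approx i w t /\ sim M i t v.

Definition circ_plus (i : G) : relation (W M) := clos_trans (W M) (circ i).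

Fixpoint sat_ail (w : W M) (f : ail G) : Prop :=
  match f with
  | AAtom p => val M p w
  | ANeg g => ~ sat_ail w g
  | AAnd g h => sat_ail w g /\ sat_ail w h
  | AAw i g => forall p, occ_ail p g -> aw M i w p
  | AImp i g => forall v, sim M i w v -> sat_ail v g
  | AExp i g => (forall p, occ_ail p g -> aw M i w p) /\
                (forall v, circ_plus i w v -> sat_ail v g)
  | ABoxApprox i g => forall v, approx i w v -> sat_ail v g
  | ABoxCirc i g => forall v, circ_plus i w v -> sat_ail v g
  end.

Fixpoint sat_fh (w : W M) (f : fh G) : Prop :=
  match f with
  | FAtom p => val M p w
  | FNeg g => ~ sat_fh w g
  | FAnd g h => sat_fh w g /\ sat_fh w h
  | FAw i g => forall p, occ_fh p g -> aw M i w p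
  | FImp i g => forall v, sim M i w v -> sat_fh v g
  | FExp i g => (forall p, occ_fh p g -> aw M i w p) /\
                (forall v, sim M i w v -> sat_fh v g)
  end.
End Sem.

Arguments sat_ail {G} M w f.
Arguments sat_fh {G} M w f.

(* Main.v *)
Require Import Defs.
From mathcomp Require Import all_boot.
From Stdlib Require Import Relations.

Lemma eq_equiv (T : Type) : equivalence T (@eq T).
Proof. split; [intros x; reflexivity | intros x y z H1 H2; subst; reflexivity | intros x y H; subst; reflexivity]. Qed.

Definition M1 (G : finType) : model G :=
  @Model G bool (inhabits true) (fun _ => @eq bool) (fun _ => eq_equiv bool)
    (fun _ _ _ => False) (fun _ _ _ _ => erefl) (fun _ w => w = true).

Definition M2 (G : finType) : model G :=
  @Model G unit (inhabits tt) (fun _ => @eq unit) (fun _ => eq_equiv unit)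
    (fun _ _ _ => False) (fun _ _ _ _ => erefl) (fun _ _ => True).

Lemma fh_same (G : finType) (phi : fh G) :
  sat_fh (M1 G) true phi <-> sat_fh (M2 G) tt phi.
Proof.
  induction phi as [p|g IH|g IHg h IHh|i g IH|i g IH|i g IH]; simpl.
  - split; auto.
  - tauto.
  - tauto.
  - tauto.
  - split.
    + intros H v Hv. destruct v. apply IH. apply H. reflexivity.
    + intros H v Hv. subst v. apply IH. apply H. reflexivity.
  - split.
    + intros [Ha H]; split; [exact Ha|]. intros v Hv. destruct v. apply IH. apply H. reflexivity.
    + intros [Ha H]; split; [exact Ha|]. intros v Hv. subst v. apply IH. apply H. reflexivity.
Qed.

Theorem lemma4 (G : finType) (i0 : G) :
  exists psi : ail G, forall phi : fh G,
    ~ (forall (M : model G) (w : W M), sat_ail M w psi <-> sat_fh M w phi).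
Proof.
  exists (ABoxApprox i0 (AAtom G 0)). intros phi H.
  have H1 := H (M1 G) true. have H2 := H (M2 G) tt.
  have h2 : sat_ail (M2 G) tt (ABoxApprox i0 (AAtom G 0)).
  { simpl. intros v _. exact I. }
  have h1 : ~ sat_ail (M1 G) true (ABoxApprox i0 (AAtom G 0)).
  { simpl. intros Hs. have := Hs false. unfold approx; simpl.
    intros K. discriminate (K (conj erefl (fun p (f : False) => match f with end))). }
  apply h1. apply H1. apply fh_same. apply H2. exact h2.
Qed.
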